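(* Let $P,Q,R$ be distributions and let $\alpha\in(1/\sqrt{2},1)$. If $$\mathrm{H}(Q,R)\geq \frac{\sqrt{2}}{\sqrt{2}\alpha-1}\,\mathrm{H}(P,R),$$ then for every $n\geq 1$, with $X_1,\dots,X_n$ i.i.d. from $R$, $$\mathbb{E}\big[\mathrm{T}(P,Q,X^n)\big]\geq 2(1-\alpha^2)\,\mathrm{H}^2(Q,R).$$
   Context: Distributions $P,Q,R$ are probability distributions on a measurable space $\mathcal{X}$, identified with their densities with respect to a common $\sigma$-finite reference measure $\mu$ (e.g. Lebesgue measure, or counting measure in the discrete case). All integrals and norms are taken with respect to $\mu$, with $\|U\|_p = (\int |U|^p\, d\mu)^{1/p}$. The Hellinger distance is $\mathrm{H}(P,Q) = \frac{1}{\sqrt{2}}\|\sqrt{P}-\sqrt{Q}\|_2$. For a sample $X^n=(X_1,\dots,X_n)$, the test statistic is $$\mathrm{T}(P,Q,X^n) = \frac{1}{n}\sum_{i=1}^n \frac{P(X_i)-Q(X_i)}{P(X_i)+Q(X_i)},$$ where a summand is interpreted as $0$ whenever $P(X_i)+Q(X_i)=0$. *)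

(* Defs.v *)
From HB Require Import structures.
From mathcomp Require Import all_boot all_order all_algebra.
From mathcomp Require Import all_classical all_reals all_analysis.
Set Implicit Arguments. Unset Strict Implicit. Unset Printing Implicit Defensive.
Import Order.TTheory GRing.Theory Num.Theory.
Local Open Scope classical_set_scope.
Local Open Scope ring_scope.

Definition is_density {d} {T : measurableType d} {R : realType}
  (mu : {measure set T -> \bar R}) (P : T -> R) : Prop :=
  [/\ measurable_fun setT P, (forall x, 0 <= P x)
    & (\int[mu]_x (P x)%:E = 1)%E].

Definition hellinger2 {d} {T : measurableType d} {R : realType}
  (mu : {measure set T -> \bar R}) (P Q : T -> R) : R :=
  2^-1 * fine (\int[mu]_x ((Num.sqrt (P x) - Num.sqrt (Q x)) ^+ 2)%:E).

Definition hellinger {d} {T : measurableType d} {R : realType}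
  (mu : {measure set T -> \bar R}) (P Q : T -> R) : R :=
  Num.sqrt (hellinger2 mu P Q).

Definition tsummand {T : Type} {R : realType} (P Q : T -> R) (x : T) : R :=
  if P x + Q x == 0 then 0 else (P x - Q x) / (P x + Q x).

Definition test_stat {T : Type} {R : realType} (P Q : T -> R) (n : nat)
  (xs : 'I_n -> T) : R :=
  n%:R^-1 * \sum_(i < n) tsummand P Q (xs i).

Definition iid_with_density {d d'} {T : measurableType d}
  {Omega : measurableType d'} {R : realType}
  (Pr : probability Omega R) (mu : {measure set T -> \bar R}) (Rd : T -> R)
  (n : nat) (X : 'I_n -> Omega -> T) : Prop :=
  [/\ (forall i, measurable_fun setT (X i)),
      (forall i (A : set T), measurable A ->
         Pr (X i @^-1` A) = (\int[mu]_(x in A) (Rd x)%:E)%E)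
    & (forall A : 'I_n -> set T, (forall i, measurable (A i)) ->
         Pr (\bigcap_(i in [set: 'I_n]) (X i @^-1` A i))
         = (\prod_(i < n) Pr (X i @^-1` A i))%E)].

(* Main.v *)
Require Import Defs.
From HB Require Import structures.
From mathcomp Require Import all_boot all_order all_algebra.
From mathcomp Require Import all_classical all_reals all_analysis.
From mathcomp Require Import measurable_realfun.
From mathcomp Require Import ring lra.
Import Order.TTheory GRing.Theory Num.Theory.
Local Open Scope classical_set_scope.
Local Open Scope ring_scope.

Import HBNNSimple.
Local Open Scope ereal_scope.

Lemma density_cov (R : realType) (d : measure_display) (T : measurableType d)
  (mu nu : {measure set T -> \bar R}) (g : T -> R) :
  (forall x, (0 <= g x)%R) -> measurable_fun setT g ->
  (forall A, measurable A -> nu A = \int[mu]_(x in A) (g x)%:E) ->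
  forall f : T -> \bar R, (forall x, 0 <= f x) -> measurable_fun setT f ->
  \int[mu]_x (f x * (g x)%:E) = \int[nu]_x f x.
Proof.
move=> g0 mg nuE f f0 mf.
have mE : measurable (setT : set T) by [].
have mG : measurable_fun setT (fun x => (g x)%:E) by exact/measurable_EFinP.
pose h := nnsfun_approx mE mf.
have -> : \int[nu]_x f x =
    lim (\int[nu]_x (EFin \o h n) x @[n --> \oo]).
  have fE x : f x = lim ((EFin \o h n) x @[n --> \oo]).
    by apply/esym/cvg_lim => //; exact: cvg_nnsfun_approx.
  under eq_integral => x _ do rewrite fE.
  apply: monotone_convergence => //.
  - move=> n; apply/measurable_EFinP.
    by apply: (measurable_funS measurableT) => //; exact/measurable_funP.
  - by move=> n x Ex //=; rewrite lee_fin.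
  - by move=> x Ex a b ab; rewrite lee_fin; exact/lefP/nd_nnsfun_approx.
have -> : \int[mu]_x (f x * (g x)%:E) =
    lim (\int[mu]_x ((EFin \o h n) x * (g x)%:E) @[n --> \oo]).
  have fg x : f x * (g x)%:E = lim (((EFin \o h n) x * (g x)%:E) @[n --> \oo]).
    by apply/esym/cvg_lim => //; apply: cvgeZr => //; exact: cvg_nnsfun_approx.
  under eq_integral => x _ do rewrite fg.
  apply: monotone_convergence => [//| | |].
  - move=> n; apply/emeasurable_funM => //.
    exact/measurable_EFinP.
  - by move=> n x Ex /=; rewrite mule_ge0 ?lee_fin.
  - by move=> x Ex a b ab/=; rewrite lee_wpmul2r ?lee_fin//; exact/lefP/nd_nnsfun_approx.
suff suf n : \int[mu]_x ((EFin \o h n) x * (g x)%:E) =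
    \int[nu]_x (EFin \o h n) x.
  by under eq_fun do rewrite suf.
transitivity (\int[nu]_x
   (\sum_(y \in range (h n)) (y * \1_(h n @^-1` [set y]) x)%:E)); last first.
  by apply: eq_integral => t tE; rewrite /= fimfunE -fsumEFin.
have indich m r : measurable_fun setT (fun x => (r * \1_(h m @^-1` [set r]) x)%:E).
  by apply: (measurable_comp measurableT) => //; exact: measurable_funM.
rewrite ge0_integral_fsum//; last by move=> m y Ey; exact: nnfun_muleindic_ge0.
transitivity (\int[mu]_x (\sum_(y \in range (h n))
    (y * \1_(h n @^-1` [set y]) x)%:E * (g x)%:E)).
  under [RHS]eq_integral => x xE.
    rewrite -ge0_mule_fsuml => [|y]; last exact: nnfun_muleindic_ge0.
    rewrite fsumEFin // -(fimfunE _ x); over.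
  by [].
rewrite ge0_integral_fsum//; last 2 first.
  - by move=> y; apply: emeasurable_funM => //.
  - by move=> m y Ey; apply: mule_ge0; [rewrite EFinM; exact: nnfun_muleindic_ge0|rewrite lee_fin].
apply: eq_fsbigr => r rhn.
under [RHS]eq_integral do rewrite EFinM.
rewrite integralZl_indic_nnsfun => //.
under eq_integral do rewrite EFinM -muleA.
rewrite ge0_integralZl//.
- under eq_integral do rewrite muleC.
  rewrite (eq_integral ((fun x => (g x)%:E) \_ (h n @^-1` [set r]))); last first.
    by move=> x xE; rewrite epatch_indic.
  by rewrite -integral_mkcond -nuE// integral_indic// setIT.
- apply: emeasurable_funM => //; exact/measurable_EFinP.
- by move=> t Et; rewrite mule_ge0 ?lee_fin.
- by move: rhn; rewrite inE => -[t _ <-]; rewrite lee_fin.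
Qed.

Local Close Scope ereal_scope.


Definition Fs (R : realType) (p q r : R) (sg : R) :=
  (p^+2 - q^+2) * (2 * r^+2 - (p^+2 + q^+2)) - (p^+2 + q^+2) * (r - q)^+2
  + 2 * (p^+2 + q^+2) * (r - p)^+2
  + sg * 2 * (p^+2 + q^+2) * ((r - p) * (r - q)).
Arguments Fs {R}.

Lemma mono (R : realType) (z x y : R) : 0 <= z -> 0 <= x -> 0 <= y ->
  (0 <= z*z) * (0 <= z*x) * (0 <= z*y) * (0 <= x*x) * (0 <= x*y) * (0 <= y*y).
Proof. move=> hz hx hy; rewrite !mulr_ge0 //. Qed.

Ltac monot z x y := let H := fresh in
  move=> hz hx hy; have [[[[[? ?] ?] ?] ?] ?] := @mono _ z x y hz hx hy; rewrite /Fs; nra.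

Lemma c_pqr (R : realType) (z x y : R) : 0 <= z -> 0 <= x -> 0 <= y -> 0 <= Fs z (z+x) (z+x+y) 1.
Proof. monot z x y. Qed.
Lemma c_prq (R : realType) (z x y : R) : 0 <= z -> 0 <= x -> 0 <= y -> 0 <= Fs z (z+x+y) (z+x) (-1).
Proof. monot z x y. Qed.
Lemma c_qpr (R : realType) (z x y : R) : 0 <= z -> 0 <= x -> 0 <= y -> 0 <= Fs (z+x) z (z+x+y) 1.
Proof. monot z x y. Qed.
Lemma c_qrp (R : realType) (z x y : R) : 0 <= z -> 0 <= x -> 0 <= y -> 0 <= Fs (z+x+y) z (z+x) (-1).
Proof. monot z x y. Qed.
Lemma c_rpq (R : realType) (z x y : R) : 0 <= z -> 0 <= x -> 0 <= y -> 0 <= Fs (z+x) (z+x+y) z 1.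
Proof. monot z x y. Qed.
Lemma c_rqp (R : realType) (z x y : R) : 0 <= z -> 0 <= x -> 0 <= y -> 0 <= Fs (z+x+y) (z+x) z 1.
Proof. monot z x y. Qed.

Lemma core (R : realType) (p q r : R) : 0 <= p -> 0 <= q -> 0 <= r ->
  0 <= Fs p q r 0 + 2 * (p^+2 + q^+2) * `|(r - p) * (r - q)|.
Proof.
move=> hp hq hr.
have [pq|qp] := leP p q; have [qr|rq] := leP q r; have [pr|rp] := leP p r.
- have H := @c_pqr _ p (q - p) (r - q) hp ltac:(lra) ltac:(lra).
  rewrite ger0_norm; last nra. move: H; rewrite /Fs; lra.
- lra.
- have H := @c_prq _ p (r - p) (q - r) hp ltac:(lra) ltac:(lra).
  rewrite ler0_norm; last nra. move: H; rewrite /Fs; lra.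
- have H := @c_rpq _ r (p - r) (q - p) hr ltac:(lra) ltac:(lra).
  rewrite ger0_norm; last nra. move: H; rewrite /Fs; lra.
- have H := @c_qpr _ q (p - q) (r - p) hq ltac:(lra) ltac:(lra).
  rewrite ger0_norm; last nra. move: H; rewrite /Fs; lra.
- have H := @c_qrp _ q (r - q) (p - r) hq ltac:(lra) ltac:(lra).
  rewrite ler0_norm; last nra. move: H; rewrite /Fs; lra.
- lra.
- have H := @c_rqp _ r (q - r) (p - q) hr ltac:(lra) ltac:(lra).
  rewrite ger0_norm; last nra. move: H; rewrite /Fs; lra.
Qed.

Lemma pw (R : realType) (a b c s be : R) : 0 <= a -> 0 <= b -> 0 <= c -> 1 <= s -> 0 < be ->
  (Num.sqrt c - Num.sqrt b)^+2 / 2 + a / 2 + c <=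
  ((if a + b == 0 then 0 else (a - b) / (a + b)) + 1) * c + b / 2
  + (1 + s / (2 * be)) * (Num.sqrt c - Num.sqrt a)^+2
  + (s * be / 2) * (Num.sqrt c - Num.sqrt b)^+2.
Proof.
move=> ha hb hc hs hbe.
have ea : a = (Num.sqrt a)^+2 by rewrite sqr_sqrtr.
have eb : b = (Num.sqrt b)^+2 by rewrite sqr_sqrtr.
have ec : c = (Num.sqrt c)^+2 by rewrite sqr_sqrtr.
have hp : 0 <= Num.sqrt a := sqrtr_ge0 a.
have hq : 0 <= Num.sqrt b := sqrtr_ge0 b.
have hr : 0 <= Num.sqrt c := sqrtr_ge0 c.
set p := Num.sqrt a in ea hp *; set q := Num.sqrt b in eb hq *;
  set r := Num.sqrt c in ec hr *.
set t := `|(r - p) * (r - q)|.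
have ht : 0 <= t := normr_ge0 _.
have am : 2 * be * t <= (r - p)^+2 + be^+2 * (r - q)^+2.
  have e1 : t = `|r - p| * `|r - q| by rewrite /t normrM.
  have e2 : (r - p)^+2 = `|r - p|^+2 by rewrite real_normK // num_real.
  have e3 : (r - q)^+2 = `|r - q|^+2 by rewrite real_normK // num_real.
  rewrite e1 e2 e3; have := sqr_ge0 (`|r - p| - be * `|r - q|); nra.
have am2 : t <= s / (2 * be) * (r - p)^+2 + s * be / 2 * (r - q)^+2.
  have h1 : t <= s * t by nra.
  apply: (le_trans h1).
  have -> : s * t = s / (2 * be) * (2 * be * t) by field; rewrite gt_eqF.
  have -> : s / (2 * be) * (r - p) ^+ 2 + s * be / 2 * (r - q) ^+ 2 =
     s / (2 * be) * ((r - p)^+2 + be^+2 * (r - q)^+2) by field; rewrite gt_eqF.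
  apply: ler_wpM2l => //; apply: divr_ge0; lra.
case: ifPn => [/eqP D0|D0].
- have a0 : a = 0 by lra.
  have b0 : b = 0 by lra.
  have p0 : p = 0 by rewrite /p a0 sqrtr0.
  have q0 : q = 0 by rewrite /q b0 sqrtr0.
  have hK : 0 <= s / (2 * be) by apply: divr_ge0; lra.
  have hK2 : 0 <= s * be / 2 by apply: divr_ge0; nra.
  rewrite p0 q0 a0 b0 !subr0; nra.
- have Dp : 0 < a + b by rewrite lt0r D0 addr_ge0.
  have W0 : 0 <= (Fs p q r 0 + 2 * (p^+2 + q^+2) * t) / (2 * (a + b)).
    apply: divr_ge0; [exact: core | lra].
  have key : (a - b) / (a + b) * c = (a - b) / 2
      + (Fs p q r 0 + 2 * (p^+2 + q^+2) * t) / (2 * (a + b))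
      + (r - q)^+2 / 2 - (r - p)^+2 - t.
    rewrite /Fs ea eb ec; field; rewrite -ea -eb gt_eqF //.
  rewrite mulrDl key; lra.
Qed.

Lemma pw2 (R : realType) (a b c s be : R) : 0 <= a -> 0 <= b -> 0 <= c -> 1 <= s -> 0 < be ->
  2^-1 * (Num.sqrt b - Num.sqrt c)^+2 + 1 * (2^-1 * a + 1 * c) <=
  1 * (((if a + b == 0 then 0 else (a - b) / (a + b)) + 1) * c)
  + 1 * (2^-1 * b + 1 * ((1 + s / (2 * be)) * (Num.sqrt a - Num.sqrt c)^+2
  + (s * be / 2) * (Num.sqrt b - Num.sqrt c)^+2)).
Proof.
move=> ha hb hc hs hbe; have := @pw _ a b c s be ha hb hc hs hbe.
have e : forall x y : R, (x - y)^+2 = (y - x)^+2 by move=> x y; ring.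
rewrite (e (Num.sqrt a)) (e (Num.sqrt b)); lra.
Qed.


Local Open Scope ereal_scope.

Lemma pr_cov (R : realType) (d : measure_display) (T : measurableType d)
  (mu : {measure set T -> \bar R}) (Rd : T -> R)
  (d' : measure_display) (Omega : measurableType d') (Pr : probability Omega R)
  (Y : Omega -> T) :
  (forall x, (0 <= Rd x)%R) -> measurable_fun setT Rd -> measurable_fun setT Y ->
  (forall A, measurable A -> Pr (Y @^-1` A) = \int[mu]_(x in A) (Rd x)%:E) ->
  forall f : T -> \bar R, (forall x, 0 <= f x) -> measurable_fun setT f ->
  \int[Pr]_w f (Y w) = \int[mu]_x (f x * (Rd x)%:E).
Proof.
move=> R0 mR mY YA f f0 mf.
pose Yi : {mfun Omega >-> T} := HB.pack Y (isMeasurableFun.Build _ _ _ _ Y mY).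
have := @ge0_integral_distribution _ _ _ _ _ Pr Yi f mf f0.
move=> <-.
by rewrite (@density_cov _ _ _ mu (distribution Pr Yi) Rd R0 mR).
Qed.

Local Close Scope ereal_scope.


Lemma minv (R : realType) : measurable_fun setT (@GRing.inv R).
Proof.
have -> : (@GRing.inv R) = fun x : R => if x == 0 then 0 else x^-1.
  by apply: funext => x; case: eqP => // ->; rewrite invr0.
apply: measurable_fun_if => //.
- apply: measurable_fun_eqr => //; exact: measurable_cst.
- rewrite setTI.
  have -> : (fun x : R => x == 0) @^-1` [set false] = [set x | x != 0].
    by apply/seteqP; split => x /=; case: eqP.
  apply: open_continuous_measurable_fun; first exact: open_neq.
  by move=> x; rewrite inE /= => x0; exact: inv_continuous.
Qed.

Lemma msqrt (R : realType) d (T : measurableType d) (f : T -> R) :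
  measurable_fun setT f -> measurable_fun setT (fun x => Num.sqrt (f x)).
Proof.
move=> mf; apply: (measurableT_comp (f := @Num.sqrt R)) => //.
apply: continuous_measurable_fun; exact: sqrt_continuous.
Qed.

Lemma mts (R : realType) d (T : measurableType d) (P Q : T -> R) :
  measurable_fun setT P -> measurable_fun setT Q -> measurable_fun setT (tsummand P Q).
Proof.
move=> mP mQ; rewrite /tsummand; apply: measurable_fun_ifT.
- apply: measurable_fun_eqr; [exact: measurable_funD|exact: measurable_cst].
- exact: measurable_cst.
- apply: measurable_funM; first exact: measurable_funB.
  apply: (measurableT_comp (f := @GRing.inv R)); first exact: minv.
  exact: measurable_funD.
Qed.

Lemma ts_bounds (R : realType) (T : Type) (P Q : T -> R) x :
  0 <= P x -> 0 <= Q x -> 0 <= tsummand P Q x + 1 /\ tsummand P Q x <= 1.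
Proof.
move=> hP hQ; rewrite /tsummand; case: ifPn => [_|D0]; first by lra.
have Dp : 0 < P x + Q x by rewrite lt0r D0 addr_ge0.
have e1 : (P x - Q x) / (P x + Q x) + 1 = 2 * P x / (P x + Q x).
  by field; rewrite gt_eqF.
have e2 : 1 - (P x - Q x) / (P x + Q x) = 2 * Q x / (P x + Q x).
  by field; rewrite gt_eqF.
split; first by rewrite e1; apply: divr_ge0; [apply: mulr_ge0 => //; lra | lra].
by rewrite -subr_ge0 e2; apply: divr_ge0; [apply: mulr_ge0 => //; lra | lra].
Qed.


Lemma mlin (R : realType) d (T : measurableType d) (f g : T -> R) (a b : R) :
  measurable_fun setT f -> measurable_fun setT g ->
  measurable_fun setT (fun x => a * f x + b * g x).
Proof.
move=> mf mg; apply: measurable_funD; apply: measurable_funM => //;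
  exact: measurable_cst.
Qed.

Lemma int_lin (R : realType) d (T : measurableType d) (mu : {measure set T -> \bar R})
  (f g : T -> R) (a b : R) : 0 <= a -> 0 <= b ->
  (forall x, 0 <= f x) -> (forall x, 0 <= g x) ->
  measurable_fun setT f -> measurable_fun setT g ->
  (\int[mu]_x ((a * f x + b * g x)%:E) =
   a%:E * \int[mu]_x (f x)%:E + b%:E * \int[mu]_x (g x)%:E)%E.
Proof.
move=> a0 b0 f0 g0 mf mg.
under eq_integral do rewrite EFinD !EFinM.
rewrite ge0_integralD //; last 4 first.
- by move=> x _; rewrite -EFinM lee_fin mulr_ge0.
- apply/measurable_EFinP; apply: measurable_funM => //; exact: measurable_cst.
- by move=> x _; rewrite -EFinM lee_fin mulr_ge0.
- apply/measurable_EFinP; apply: measurable_funM => //; exact: measurable_cst.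
rewrite ge0_integralZl_EFin //; last 2 first.
- by move=> x _; rewrite lee_fin.
- exact/measurable_EFinP.
rewrite ge0_integralZl_EFin //.
- by move=> x _; rewrite lee_fin.
- exact/measurable_EFinP.
Qed.

Lemma hell_fin (R : realType) d (T : measurableType d) (mu : {measure set T -> \bar R})
  (P Q : T -> R) : is_density mu P -> is_density mu Q ->
  (\int[mu]_x (((Num.sqrt (P x) - Num.sqrt (Q x)) ^+ 2)%:E) =
   (2 * hellinger2 mu P Q)%:E)%E.
Proof.
move=> [mP P0 IP] [mQ Q0 IQ].
set I := (\int[mu]_x _)%E.
have I0 : (0 <= I)%E by apply: integral_ge0 => x _; rewrite lee_fin sqr_ge0.
have I2 : (I <= 2%:E)%E.
  have -> : (2%:E = \int[mu]_x ((1 * P x + 1 * Q x)%:E))%E.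
    by rewrite int_lin // IP IQ !mul1e.
  apply: ge0_le_integral => //.
  - by move=> x _; rewrite lee_fin sqr_ge0.
  - apply/measurable_EFinP; apply: measurable_funX.
    apply: measurable_funB; exact: msqrt.
  - apply/measurable_EFinP; exact: mlin.
  - move=> x _; rewrite lee_fin !mul1r.
    have hp := sqr_sqrtr (P0 x); have hq := sqr_sqrtr (Q0 x).
    have := sqrtr_ge0 (P x); have := sqrtr_ge0 (Q x).
    nra.
have If : I \is a fin_num by rewrite ge0_fin_numE // (le_lt_trans I2) // ltry.
rewrite /hellinger2 -/I mulrA divff ?mul1r ?fineK //.
Qed.


Theorem lemma4 (R : realType) (d : measure_display) (T : measurableType d)
  (mu : {measure set T -> \bar R}) (P Q Rd : T -> R) (alpha : R) :
  sigma_finite setT mu ->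
  is_density mu P -> is_density mu Q -> is_density mu Rd ->
  (Num.sqrt 2)^-1 < alpha -> alpha < 1 ->
  Num.sqrt 2 / (Num.sqrt 2 * alpha - 1) * hellinger mu P Rd
    <= hellinger mu Q Rd ->
  forall (n : nat), (0 < n)%N ->
  forall (d' : measure_display) (Omega : measurableType d')
    (Pr : probability Omega R) (X : 'I_n -> Omega -> T),
  iid_with_density Pr mu Rd X ->
  ((2 * (1 - alpha ^+ 2) * hellinger2 mu Q Rd)%:E
    <= \int[Pr]_w (test_stat P Q (fun i => X i w))%:E)%E.
Proof.
move=> _ hdP hdQ hdR ha1 ha2 hH n n0 d' Omega Pr X [mX XA _].
have [mP P0 IP] := hdP; have [mQ Q0 IQ] := hdQ; have [mR R0 IR] := hdR.
set s := Num.sqrt (2 : R).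
have s2 : s ^+ 2 = 2 by rewrite sqr_sqrtr.
have s0 : 0 < s by rewrite sqrtr_gt0.
have s1 : 1 <= s by nra.
have sinv : s^-1 = s / 2 by rewrite -[in RHS]s2 expr2 invfM mulrA divff ?mul1r ?gt_eqF.
set be := alpha - s^-1.
have be0 : 0 < be by rewrite subr_gt0.
have eK : s / (s * alpha - 1) = be^-1.
  rewrite /be (_ : s * alpha - 1 = s * (alpha - s^-1)).
    by rewrite invfM mulrA divff ?mul1r ?gt_eqF.
  by rewrite mulrBr divff ?gt_eqF.
rewrite eK in hH.
set h2P := hellinger2 mu P Rd; set h2Q := hellinger2 mu Q Rd.
have IuP := @hell_fin _ _ _ mu P Rd hdP hdR; have IvQ := @hell_fin _ _ _ mu Q Rd hdQ hdR.
rewrite -/h2P in IuP; rewrite -/h2Q in IvQ.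
have h2P0 : 0 <= h2P.
  by rewrite /h2P /hellinger2 mulr_ge0 // fine_ge0 // integral_ge0 // => x _; rewrite lee_fin sqr_ge0.
have h2Q0 : 0 <= h2Q.
  by rewrite /h2Q /hellinger2 mulr_ge0 // fine_ge0 // integral_ge0 // => x _; rewrite lee_fin sqr_ge0.
have hPQ : h2P <= be ^+ 2 * h2Q.
  move: hH; rewrite /hellinger -/h2P -/h2Q => hH.
  have e1 := sqr_sqrtr h2P0; have e2 := sqr_sqrtr h2Q0.
  have g1 := sqrtr_ge0 h2P; have g2 := sqrtr_ge0 h2Q.
  have hH' : Num.sqrt h2P <= be * Num.sqrt h2Q.
    have bi : 0 < be^-1 by rewrite invr_gt0.
    by rewrite -(ler_pM2l bi) mulrA mulVf ?gt_eqF ?mul1r.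
  rewrite -e1 -e2; nra.
set K1 := 1 + s / (2 * be); set K2 := s * be / 2.
have K10 : 0 <= K1 by rewrite /K1; apply: addr_ge0 => //; apply: divr_ge0; lra.
have K20 : 0 <= K2 by rewrite /K2; apply: divr_ge0; nra.
pose ps x := tsummand P Q x + 1.
have ps0 x : 0 <= ps x by have [] := @ts_bounds _ _ P Q x (P0 x) (Q0 x).
have ps2 x : ps x <= 2 by have [] := @ts_bounds _ _ P Q x (P0 x) (Q0 x); rewrite /ps; lra.
have mps : measurable_fun setT ps.
  apply: measurable_funD; [exact: mts | exact: measurable_cst].
pose u x := (Num.sqrt (P x) - Num.sqrt (Rd x))^+2.
pose v x := (Num.sqrt (Q x) - Num.sqrt (Rd x))^+2.
have mu_ : measurable_fun setT u.
  by apply: measurable_funX; apply: measurable_funB; exact: msqrt.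
have mv_ : measurable_fun setT v.
  by apply: measurable_funX; apply: measurable_funB; exact: msqrt.
have u0 x : 0 <= u x by exact: sqr_ge0.
have v0 x : 0 <= v x by exact: sqr_ge0.
have mpsR : measurable_fun setT (fun x => ps x * Rd x) by exact: measurable_funM.
have psR0 x : 0 <= ps x * Rd x by exact: mulr_ge0.
pose J := (\int[mu]_x ((ps x * Rd x)%:E))%E.
have J0 : (0 <= J)%E by apply: integral_ge0 => x _; rewrite lee_fin.
have J2 : (J <= 2%:E)%E.
  have -> : (2%:E = \int[mu]_x ((2 * Rd x + 0 * Rd x)%:E))%E.
    by rewrite int_lin // IR mul0e adde0 mule1.
  apply: ge0_le_integral => //.
  - by move=> x _; rewrite lee_fin.
  - exact/measurable_EFinP.
  - apply/measurable_EFinP; exact: mlin.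
  - by move=> x _; rewrite lee_fin mul0r addr0 ler_wpM2r.
have Jfin : J \is a fin_num by rewrite ge0_fin_numE // (le_lt_trans J2) // ltry.
have ineq : (\int[mu]_x ((2^-1 * v x + 1 * (2^-1 * P x + 1 * Rd x))%:E) <=
    \int[mu]_x ((1 * (ps x * Rd x) + 1 * (2^-1 * Q x + 1 * (K1 * u x + K2 * v x)))%:E))%E.
  apply: ge0_le_integral => //.
  - move=> x _; rewrite lee_fin; apply: addr_ge0; first by apply: mulr_ge0.
    by rewrite mul1r; apply: addr_ge0; [apply: mulr_ge0 | rewrite mul1r].
  - by apply/measurable_EFinP; apply: mlin => //; apply: mlin.
  - by apply/measurable_EFinP; apply: mlin => //; apply: mlin => //; apply: mlin.
  - by move=> x _; rewrite lee_fin; exact: pw2.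
have mPR : measurable_fun setT (fun x => 2^-1 * P x + 1 * Rd x) by exact: mlin.
have PR0 x : 0 <= 2^-1 * P x + 1 * Rd x.
  by apply: addr_ge0; apply: mulr_ge0 => //; rewrite invr_ge0.
have muv : measurable_fun setT (fun x => K1 * u x + K2 * v x) by exact: mlin.
have uv0 x : 0 <= K1 * u x + K2 * v x by apply: addr_ge0; apply: mulr_ge0.
have mQuv : measurable_fun setT (fun x => 2^-1 * Q x + 1 * (K1 * u x + K2 * v x)) by exact: mlin.
have Quv0 x : 0 <= 2^-1 * Q x + 1 * (K1 * u x + K2 * v x).
  by apply: addr_ge0; apply: mulr_ge0 => //; rewrite invr_ge0.
have h2 : (0 : R) <= 2^-1 by rewrite invr_ge0.
rewrite (@int_lin _ _ _ mu v (fun x => 2^-1 * P x + 1 * Rd x) 2^-1 1) // in ineq.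
rewrite (@int_lin _ _ _ mu P Rd 2^-1 1) // in ineq.
rewrite (@int_lin _ _ _ mu (fun x => ps x * Rd x) (fun x => 2^-1 * Q x + 1 * (K1 * u x + K2 * v x)) 1 1) // in ineq.
rewrite (@int_lin _ _ _ mu Q (fun x => K1 * u x + K2 * v x) 2^-1 1) // in ineq.
rewrite (@int_lin _ _ _ mu u v K1 K2) // in ineq.
rewrite IuP IvQ IP IQ IR -/J -(fineK Jfin) in ineq.
rewrite -!EFinM -!EFinD lee_fin in ineq.
have fin : 2 * (1 - alpha^+2) * h2Q <= fine J - 1.
  have hK : K1 * be^+2 = be^+2 + s * be / 2 by rewrite /K1; field; rewrite gt_eqF.
  have t1 : K1 * h2P <= (be^+2 + s * be / 2) * h2Q.
    by rewrite -hK -mulrA; apply: ler_wpM2l.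
  have t2 : 1 - 2 * (be^+2 + s * be / 2) - 2 * K2 = 2 * (1 - alpha^+2).
    rewrite /K2 /be sinv; lra.
  have t3 : (1 - 2 * (be^+2 + s * be / 2) - 2 * K2) * h2Q = 2 * (1 - alpha^+2) * h2Q.
    by rewrite t2.
  lra.
set Tst := fun w => test_stat P Q (fun i => X i w).
have mTs i : measurable_fun setT (fun w => tsummand P Q (X i w)).
  by apply: measurableT_comp; [exact: mts | exact: mX].
have mT : measurable_fun setT Tst.
  rewrite /Tst /test_stat; apply: measurable_funM; first exact: measurable_cst.
  exact: measurable_sum.
have nR : (0 : R) < n%:R by rewrite ltr0n.
have Tb w : `|Tst w| <= 1.
  rewrite /Tst /test_stat normrM ger0_norm ?invr_ge0 ?ler0n //.
  rewrite ler_pdivrMl // mulr1.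
  apply: (le_trans (ler_norm_sum _ _ _)).
  apply: (@le_trans _ _ (\sum_(i < n) (1:R))); last by rewrite sumr_const card_ord.
  apply: ler_sum => i _.
  by have [hb1 hb2] := @ts_bounds _ _ P Q (X i w) (P0 _) (Q0 _); rewrite ler_norml; lra.
have i1 : Pr.-integrable setT (EFin \o cst (1 : R)).
  exact: finite_measure_integrable_cst.
have iT : Pr.-integrable setT (EFin \o Tst).
  apply: le_integrable i1 => //; first exact/measurable_EFinP.
  by move=> w _ /=; rewrite normr1 lee_fin.
have eD := integralD_EFin measurableT iT i1.
have hi i : (\int[Pr]_w ((ps (X i w))%:E) = J)%E.
  transitivity (\int[mu]_x ((ps x)%:E * (Rd x)%:E))%E.
    apply: (@pr_cov _ _ _ mu Rd _ _ Pr (X i) R0 mR (mX i) (XA i) (fun x => (ps x)%:E)).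
    - by move=> x; rewrite lee_fin.
    - exact/measurable_EFinP.
  by apply: eq_integral => x _; rewrite EFinM.
have eL : (\int[Pr]_w ((EFin \o Tst) w + (EFin \o cst (1%R : R)) w) = (fine J)%:E)%E.
  transitivity (\int[Pr]_w ((n%:R^-1 * \sum_(i < n) ps (X i w))%:E))%E.
    apply: eq_integral => w _ /=; rewrite -EFinD; congr EFin.
    rewrite /Tst /test_stat /ps big_split /= sumr_const card_ord.
    by rewrite mulrDr mulVf ?gt_eqF.
  under eq_integral do rewrite EFinM -sumEFin.
  have mXi i : measurable_fun setT (fun w => (ps (X i w))%:E).
    apply/measurable_EFinP.
    by apply: measurableT_comp; [exact: mps | exact: mX].
  have msum : measurable_fun setT (fun w => (\sum_(i < n) (ps (X i w))%:E)%E).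
    exact: emeasurable_sum.
  have sum0 : forall w, setT w -> (0 <= \sum_(i < n) (ps (X i w))%:E)%E.
    move=> w _; rewrite sumEFin lee_fin; apply: sumr_ge0 => i _; exact: ps0.
  have ni0 : (0 : R) <= n%:R^-1 by rewrite invr_ge0 ler0n.
  rewrite ge0_integralZl_EFin //.
  have Xi0 : forall i w, setT w -> (0 <= (ps (X i w))%:E)%E by move=> i w _; rewrite lee_fin.
  rewrite ge0_integral_sum //.
  under eq_bigr do rewrite hi.
  rewrite -(fineK Jfin) sumEFin sumr_const card_ord -EFinM; congr EFin.
  by rewrite /= -(mulr_natl (fine J)) mulrA mulVf ?gt_eqF ?mul1r.
have e1 : (\int[Pr]_w (EFin \o cst (1%R : R)) w = 1)%E.
  by rewrite (eq_integral (cst 1%E)) // integral_cst // mul1e; exact: probability_setT.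
rewrite eL e1 in eD.
move: eD; rewrite -/Tst.
case: (\int[Pr]_w (EFin \o Tst) w)%E => [r||] //= /eqP.
rewrite -EFinD eqe => /eqP Jr.
rewrite lee_fin; lra.
Qed.
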